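(* Let $\mathcal{N}=(N,M_0)$ be a two-level PT-net system with transitions partitioned into low-level $L$ and high-level $H$. Then $\mathcal{N}$ has the property BNDC if and only if for all reachable markings $M_1$ of $N\setminus H$ and $M_2$ of $N$ (from $M_0$), $M_1\,R\,M_2$ implies $\mathcal{L}(N\setminus H,M_1)=\mathcal{L}(N\setminus H,M_2)$.
   Context: A PT-net is $N=(P,T,F)$ with $P,T$ finite disjoint and $F:(P\times T)\cup(T\times P)\to\mathbb{N}$; markings $M:P\to\mathbb{N}$; $t$ enabled at $M$ ($M[t\rangle$) iff $M(p)\ge F(p,t)$ for all $p$, firing gives $M'(p)=M(p)+F(t,p)-F(p,t)$; extended to sequences. $N\setminus H$ deletes the transitions of $H$. $\mathcal{L}(N\setminus H,M)$ is the set of all $s\in L^*$ with $M[s\rangle$ in $N\setminus H$. For systems with disjoint place sets, $\mathcal{N}_1|\mathcal{N}_2$ has the union of places, the union of transitions (shared transitions synchronize, arcs inherited from each component on its own places), and union of initial markings. A high-level net system has only high-level transitions. Transitions in $L$ are observable, those in $H$ unobservable; weak bisimilarity $\approx$ is the existence of a relation between reachable markings containing the initial pair such that, for related $(M,M')$ and symmetrically, an observable step $M[l\rangle$ is matched by unobservable steps, $l$, unobservable steps leading to a related pair, and an unobservable step is matched by unobservable steps leading to a related pair. BNDC: for every high-level net system $\mathcal{N}'$ (places disjoint from those of $\mathcal{N}$) with transition set $H'$ disjoint from $L$, $\mathcal{N}\setminus H\approx(\mathcal{N}|\mathcal{N}')\setminus(H\setminus H')$. The relation $R$: $M\,R\,M'$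 iff there exist $w\in L^*$ and $w'\in(L\cup H)^*$ with $M_0[w\rangle M$, $M_0[w'\rangle M'$, and $w$ the projection of $w'$ onto $L^*$. *)

(* Defs.v *)
From mathcomp Require Import all_boot.
Set Implicit Arguments. Unset Strict Implicit. Unset Printing Implicit Defensive.

(* F(p,t) = pre p t, F(t,p) = post t p (values for t outside ntrans are
   irrelevant). *)
Record pt_net (P : finType) (Tr : eqType) := PTNet {
  ntrans : seq Tr;
  pre : P -> Tr -> nat;
  post : Tr -> P -> nat }.

Definition marking (P : finType) := {ffun P -> nat}.

Section Nets.
Variables (Tr : eqType).

Definition fire (P : finType) (N : pt_net P Tr) (M : marking P) (t : Tr)
    (M' : marking P) : Prop :=
  [/\ t \in ntrans N, (forall p, pre N p t <= M p) &
      M' = [ffun p => M p - pre N p t + post N t p]].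

Fixpoint fire_seq (P : finType) (N : pt_net P Tr) (M : marking P) (s : seq Tr)
    (M' : marking P) : Prop :=
  match s with
  | [::] => M' = M
  | t :: s' => exists M1, fire N M t M1 /\ fire_seq N M1 s' M'
  end.

Definition reachable (P : finType) (N : pt_net P Tr) (M0 M : marking P) :=
  exists s, fire_seq N M0 s M.

Definition delete (P : finType) (N : pt_net P Tr) (H : pred Tr) : pt_net P Tr :=
  PTNet [seq t <- ntrans N | ~~ H t] (pre N) (post N).

(* Parallel composition N1 | N2 of nets with disjoint places P1 + P2;
   shared transitions synchronise, arcs inherited from each component. *)
Definition compose (P1 P2 : finType) (N1 : pt_net P1 Tr) (N2 : pt_net P2 Tr)
    : pt_net (P1 + P2)%type Tr :=
  PTNet (ntrans N1 ++ ntrans N2)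
    (fun x t => match x with
                | inl p => if t \in ntrans N1 then pre N1 p t else 0
                | inr p => if t \in ntrans N2 then pre N2 p t else 0 end)
    (fun t x => match x with
                | inl p => if t \in ntrans N1 then post N1 t p else 0
                | inr p => if t \in ntrans N2 then post N2 t p else 0 end).

Definition compose_marking (P1 P2 : finType) (M1 : marking P1) (M2 : marking P2)
    : marking (P1 + P2)%type :=
  [ffun x => match x with inl p => M1 p | inr p => M2 p end].

Definition tau_step (P : finType) (L : pred Tr) (N : pt_net P Tr)
    (M M' : marking P) : Prop :=
  exists t, ~~ L t /\ fire N M t M'.

Inductive tau_steps (P : finType) (L : pred Tr) (N : pt_net P Tr)
    : marking P -> marking P -> Prop :=
  | tau_refl M : tau_steps L N M M
  | tau_cons M M1 M' : tau_step L N M M1 -> tau_steps L N M1 M' ->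
      tau_steps L N M M'.

Definition weak_sim_step (P1 P2 : finType) (L : pred Tr)
    (N1 : pt_net P1 Tr) (N2 : pt_net P2 Tr)
    (B : marking P1 -> marking P2 -> Prop) : Prop :=
  forall M M', B M M' ->
  (forall l M1, L l -> fire N1 M l M1 ->
     exists M'a M'b M'c, [/\ tau_steps L N2 M' M'a, fire N2 M'a l M'b,
                             tau_steps L N2 M'b M'c & B M1 M'c]) /\
  (forall h M1, ~~ L h -> fire N1 M h M1 ->
     exists M'c, tau_steps L N2 M' M'c /\ B M1 M'c).

(* weak bisimilarity of net systems (N1, M01) and (N2, M02),
   L = observable transitions *)
Definition weak_bisim (P1 P2 : finType) (L : pred Tr)
    (N1 : pt_net P1 Tr) (M01 : marking P1)
    (N2 : pt_net P2 Tr) (M02 : marking P2) : Prop :=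
  exists B : marking P1 -> marking P2 -> Prop,
    [/\ (forall M M', B M M' -> reachable N1 M01 M /\ reachable N2 M02 M'),
        B M01 M02,
        weak_sim_step L N1 N2 B &
        weak_sim_step L N2 N1 (fun M' M => B M M')].

Definition BNDC (P : finType) (N : pt_net P Tr) (M0 : marking P)
    (L H : pred Tr) : Prop :=
  forall (P' : finType) (N' : pt_net P' Tr) (M0' : marking P'),
    (forall t, t \in ntrans N' -> ~~ L t) ->
    weak_bisim L (delete N H) M0
      (delete (compose N N') (fun t => H t && (t \notin ntrans N')))
      (compose_marking M0 M0').

Definition lang (P : finType) (N : pt_net P Tr) (L : pred Tr)
    (M : marking P) (s : seq Tr) : Prop :=
  all L s /\ exists M', fire_seq N M s M'.

Definition relR (P : finType) (N : pt_net P Tr) (M0 : marking P)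
    (L H : pred Tr) (M M' : marking P) : Prop :=
  exists w w', [/\ all L w, all (fun t => L t || H t) w',
    fire_seq N M0 w M, fire_seq N M0 w' M' & w = [seq t <- w' | L t]].

End Nets.

(* Main.v *)
Require Import Defs.
From mathcomp Require Import all_boot.
Set Implicit Arguments. Unset Strict Implicit. Unset Printing Implicit Defensive.

Lemma fire_seq_rcons (Tr : eqType) (P : finType) (N : pt_net P Tr) A s t B C :
  fire_seq N A s B -> fire N B t C -> fire_seq N A (rcons s t) C.
Proof.
elim: s A => [|u s IH] A /=.
  by move=> -> f; exists C.
by case=> M1 [f fs] g; exists M1; split=> //; apply: IH fs g.
Qed.

Lemma fire_del (Tr : eqType) (P : finType) (N : pt_net P Tr) (H : pred Tr) M t M' :
  fire (delete N H) M t M' <-> fire N M t M' /\ ~~ H t.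
Proof.
split.
  by case=> /=; rewrite mem_filter => /andP[h tN] Hp ->.
by case; case=> tN Hp -> h; split=> //=; rewrite mem_filter h.
Qed.

Lemma fire_seq_del (Tr : eqType) (P : finType) (N : pt_net P Tr) (H : pred Tr) M s M' :
  fire_seq (delete N H) M s M' -> fire_seq N M s M'.
Proof.
elim: s M => [|t s IH] M //=.
by case=> M1 [/fire_del [f _] fs]; exists M1; split=> //; apply: IH.
Qed.

Lemma fire_seq_det (Tr : eqType) (P : finType) (N : pt_net P Tr) M s A B :
  fire_seq N M s A -> fire_seq N M s B -> A = B.
Proof.
elim: s M => [|t s IH] M /=; first by move=> -> ->.
case=> M1 [[_ _ ->] f1]; case=> M2 [[_ _ ->] f2]; exact: IH f1 f2.
Qed.

Definition left (P P' : finType) (X : marking (P + P')%type) : marking P :=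
  [ffun p => X (inl p)].

Lemma proj_fire (Tr : eqType) (P P' : finType) (N : pt_net P Tr) (N' : pt_net P' Tr)
    (K : pred Tr) X t Y :
  fire (delete (compose N N') K) X t Y ->
  (t \in ntrans N -> fire N (left X) t (left Y)) /\
  (t \notin ntrans N -> left Y = left X).
Proof.
case=> /=; rewrite mem_filter => /andP[_ Ht] Hpre ->; split.
- move=> tN; split=> // [p|].
    by have := Hpre (inl p); rewrite /= tN ffunE.
  by apply/ffunP=> p; rewrite !ffunE /= tN.
- by move=> tN; apply/ffunP=> p; rewrite !ffunE /= (negbTE tN) subn0 addn0.
Qed.

Lemma proj_seq (Tr : eqType) (L : pred Tr) (P P' : finType) (N : pt_net P Tr)
    (N' : pt_net P' Tr) (K : pred Tr) :
  (forall t, t \in ntrans N' -> ~~ L t) ->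
  forall X v Y, fire_seq (delete (compose N N') K) X v Y ->
  exists w', [/\ fire_seq N (left X) w' (left Y), {subset w' <= ntrans N} &
                 [seq t <- w' | L t] = [seq t <- v | L t]].
Proof.
move=> hN' X v; elim: v X => [|t v IH] X Y /=.
  by move=> ->; exists [::].
case=> X1 [f fs]; have [w' [h1 h2 h3]] := IH _ _ fs.
have [pa pb] := proj_fire f.
have tD : t \in ntrans N ++ ntrans N'.
  by case: f => + _ _; rewrite /= mem_filter => /andP[_].
case tN : (t \in ntrans N).
- exists (t :: w'); split.
  + by exists (left X1); split=> //; apply: pa.
  + by move=> x; rewrite inE => /orP[/eqP->|/h2].
  + by rewrite /= h3.
- exists w'; rewrite -(pb (negbT tN)); split=> //.
  have : t \in ntrans N' by rewrite mem_cat tN in tD.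
  by move/hN' => /negbTE /= ->.
Qed.
Lemma dirB (Tr : eqType) (P : finType) (N : pt_net P Tr)
    (M0 : marking P) (L H : pred Tr) :
  (forall t, t \in ntrans N <-> L t \/ H t) ->
  (forall t, ~ (L t /\ H t)) ->
  (forall M1 M2, reachable (delete N H) M0 M1 -> reachable N M0 M2 ->
     relR N M0 L H M1 M2 ->
     forall s, lang (delete N H) L M1 s <-> lang (delete N H) L M2 s) ->
  BNDC N M0 L H.
Proof.
move=> hLH hdis hC P' N' M0' hN'.
set D := delete (compose N N') _.
set X0 := compose_marking M0 M0'.
have lX0 : left X0 = M0 by apply/ffunP=> p; rewrite !ffunE.
have Lnot : forall t, L t -> t \notin ntrans N'.
  by move=> t Lt; apply/negP => /hN'; rewrite Lt.
have LnH : forall t, L t -> ~~ H t by move=> t Lt; apply/negP=> Ht; exact: (hdis t).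
pose B M X := exists w w'', [/\ fire_seq (delete N H) M0 w M, fire_seq D X0 w'' X
    & w = [seq t <- w'' | L t]].
have key : forall M X, B M X -> forall l, L l ->
    (exists M1, fire (delete N H) (left X) l M1) -> exists M1, fire (delete N H) M l M1.
  move=> M X [w [w'' [f1 f2 e]]] l Ll [M1 fl].
  have [w' [p1 p2 p3]] := proj_seq hN' f2.
  rewrite lX0 in p1.
  have : lang (delete N H) L (left X) [:: l] by split; [rewrite /= Ll | exists M1, M1].
  case/(hC M (left X)).
  - by exists w.
  - by exists w'.
  - exists w, w'; split=> //.
    + by rewrite e; apply/allP=> x; rewrite mem_filter => /andP[].
    + by apply/allP=> x /p2 /hLH [->|->] //; rewrite orbT.
    + exact: fire_seq_del f1.
    + by rewrite e p3.
  by move=> _ [M' [M2 [f _]]]; exists M2.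
exists (fun M X => B M X); split.
- move=> M X [w [w'' [f1 f2 _]]]; split; [by exists w | by exists w''].
- by exists [::], [::].
- move=> M X hB; split; last first.
    by move=> h M1 Lh /fire_del [[tN _ _] Hh]; case: (hLH h) => /(_ tN) [Lh'|]; [rewrite Lh' in Lh | rewrite (negbTE Hh)].
  move=> l M1 Ll fl.
  have [Y fY] : exists Y, fire D X l Y.
    have [w [w'' [f1 f2 e]]] := hB.
    have [w' [p1 p2 p3]] := proj_seq hN' f2.
    rewrite lX0 in p1.
    have : lang (delete N H) L M [:: l] by split; [rewrite /= Ll | exists M1, M1].
    case/(hC M (left X)).
    - by exists w.
    - by exists w'.
    - exists w, w'; split=> //.
      + by rewrite e; apply/allP=> x; rewrite mem_filter => /andP[].
      + by apply/allP=> x /p2 /hLH [->|->] //; rewrite orbT.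
      + exact: fire_seq_del f1.
      + by rewrite e p3.
    move=> _ [M' [M2 [/fire_del [[tN hp _] _] _]]].
    exists [ffun x => X x - pre D x l + post D l x]; split=> //.
    + by rewrite /= mem_filter mem_cat tN (negbTE (LnH l Ll)).
    + case=> p /=; first by rewrite tN; have := hp p; rewrite ffunE.
      by rewrite (negbTE (Lnot l Ll)).
  exists X, Y, Y; split; [exact: tau_refl|exact: fY|exact: tau_refl|].
  have [w [w'' [f1 f2 e]]] := hB.
  rewrite /B; exists (rcons w l), (rcons w'' l); split.
  + exact: fire_seq_rcons f1 fl.
  + exact: fire_seq_rcons f2 fY.
  + by rewrite -!cats1 filter_cat /= Ll e.
- move=> X M hB; split.
  + move=> l Y Ll fY.
    have [w [w'' [f1 f2 e]]] := hB.
    have [pa _] := proj_fire fY.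
    have tN : l \in ntrans N.
      case: fY => + _ _; rewrite /= mem_filter mem_cat => /andP[_ /orP[]] //.
      by move/hN'; rewrite Ll.
    have [M1 fM1] := key M X hB l Ll (ex_intro _ (left Y) (proj2 (fire_del _ _ _ _ _) (conj (pa tN) (LnH l Ll)))).
    exists M, M1, M1; split; [exact: tau_refl|exact: fM1|exact: tau_refl|].
    rewrite /B; exists (rcons w l), (rcons w'' l); split.
    * exact: fire_seq_rcons f1 fM1.
    * exact: fire_seq_rcons f2 fY.
    * by rewrite -!cats1 filter_cat /= Ll e.
  + move=> h Y Lh fY.
    exists M; split; first by constructor.
    have [w [w'' [f1 f2 e]]] := hB.
    rewrite /B; exists w, (rcons w'' h); split=> //.
    * exact: fire_seq_rcons f2 fY.
    * by rewrite -!cats1 filter_cat /= (negbTE Lh) cats0.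
Qed.

Lemma dirA (Tr : eqType) (P : finType) (N : pt_net P Tr)
    (M0 : marking P) (L H : pred Tr) :
  (forall t, t \in ntrans N <-> L t \/ H t) ->
  (forall t, ~ (L t /\ H t)) ->
  BNDC N M0 L H ->
  (forall M1 M2, reachable (delete N H) M0 M1 -> reachable N M0 M2 ->
     relR N M0 L H M1 M2 ->
     forall s, lang (delete N H) L M1 s <-> lang (delete N H) L M2 s).
Proof.
move=> hLH hdis hB M1 M2 _ _ [w [w' [aw aw' f1 f2 e]]].
have LnH : forall t, L t -> ~~ H t by move=> t Lt; apply/negP=> Ht; exact: (hdis t).
set hs := [seq t <- w' | H t].
pose n := size hs.
pose N' : pt_net 'I_n Tr := PTNet hs (fun (p : 'I_n) t => nat_of_bool (index t hs == p)) (fun _ _ => 0).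
pose cnt (u : seq Tr) : marking 'I_n := [ffun p : 'I_n => count (fun t => index t hs == p) u].
pose Z := cnt [::].
have hsH : forall t, t \in hs -> H t by move=> t; rewrite mem_filter => /andP[].
have hN' : forall t, t \in ntrans N' -> ~~ L t.
  by move=> t /hsH Ht; apply/negP=> Lt; exact: (hdis t).
have [B [_ hinit s1 s2]] := hB _ N' (cnt hs) hN'.
set D := delete (compose N N') _ in s1 s2.
set ND := delete N H in s1 s2 *.
have run : forall v Ma Mb, fire_seq N Ma v Mb -> all (fun t => L t || H t) v ->
    {subset [seq t <- v | H t] <= hs} ->
    fire_seq D (compose_marking Ma (cnt [seq t <- v | H t])) v (compose_marking Mb Z).
  elim=> [|t v IH] Ma Mb /=; first by move=> ->.
  case=> Ma1 [[tN hp eM1] fs] /andP[tLH av] sub.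
  have th : H t -> t \in hs by move=> Ht; apply: sub; rewrite /= Ht mem_head.
  exists (compose_marking Ma1 (cnt [seq t <- v | H t])); split; last first.
    apply: IH fs _ _ => // x xv; apply: sub; rewrite /=; case: (H t) => //.
    by rewrite inE xv orbT.
  split.
  - rewrite /= mem_filter mem_cat tN /=.
    by case Ht: (H t) => //=; rewrite th.
  - case=> p /=; first by rewrite tN ffunE; exact: hp.
    case Ht: (H t); first by rewrite th // !ffunE /= leq_addr.
    by case: ifP => // /hsH; rewrite Ht.
  - rewrite eM1; apply/ffunP; case=> p; rewrite !ffunE /=; first by rewrite tN.
    case Ht: (H t); first by rewrite th //= addn0 addKn.
    case: ifP => [/hsH|]; first by rewrite Ht.
    by rewrite subn0 addn0.
have notau : forall Mb Y h, ~~ L h -> fire D (compose_marking Mb Z) h Y -> False.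
  move=> Mb Y h Lh [+ hp _]; rewrite /= mem_filter mem_cat => /andP[hk hm].
  case: (boolP (h \in hs)) => hh.
    have ih : index h hs < n by rewrite index_mem.
    by have := hp (inr (Ordinal ih)); rewrite /= hh eqxx !ffunE.
  move: hm; rewrite (negbTE hh) orbF => /hLH [Lh'|Hh]; first by rewrite Lh' in Lh.
  by rewrite Hh hh in hk.
have tausD : forall X Y, tau_steps L D X Y -> forall Mb, X = compose_marking Mb Z -> Y = X.
  move=> X Y; elim=> // M M3 M' [h [Lh f]] _ _ Mb eM.
  by rewrite eM in f; case: (notau _ _ _ Lh f).
have tausND : forall X Y, tau_steps L ND X Y -> Y = X.
  move=> X Y; elim=> // M M3 M' [h [Lh /fire_del [[tN _ _] Hh]]].
  by case: (hLH h) => /(_ tN) [Lh'|Hh']; [rewrite Lh' in Lh | rewrite Hh' in Hh].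
have fireL1 : forall Mb t Y, L t -> fire D (compose_marking Mb Z) t Y ->
    exists Mb1, fire ND Mb t Mb1 /\ Y = compose_marking Mb1 Z.
  move=> Mb t Y Lt [+ hp ->]; rewrite /= mem_filter mem_cat (negbTE (LnH _ Lt)) /=.
  have nh : t \notin hs by apply/negP=> /hsH; rewrite (negbTE (LnH _ Lt)).
  rewrite (negbTE nh) orbF => tN.
  exists [ffun p => Mb p - pre N p t + post N t p]; split.
    apply/fire_del; split; last exact: LnH; split=> // p.
    by have := hp (inl p); rewrite /= tN ffunE.
  apply/ffunP; case=> p; rewrite !ffunE /= ?tN //.
have fireL2 : forall Mb t Mb1, fire ND Mb t Mb1 ->
    fire D (compose_marking Mb Z) t (compose_marking Mb1 Z).
  move=> Mb t Mb1 /fire_del [[tN hp ->] Ht].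
  have nh : t \notin hs by apply/negP=> /hsH; rewrite (negbTE Ht).
  split.
  - by rewrite /= mem_filter mem_cat tN (negbTE Ht).
  - by case=> p /=; [rewrite tN ffunE; exact: hp | rewrite (negbTE nh)].
  - apply/ffunP; case=> p; rewrite !ffunE /= ?tN //.
    by rewrite (negbTE nh).
have sim : forall v X Y Ma, B Ma X -> fire_seq D X v Y ->
    exists Ma', fire_seq ND Ma [seq t <- v | L t] Ma' /\ B Ma' Y.
  elim=> [|t v IH] X Y Ma hBa /=; first by move=> ->; exists Ma.
  case=> X1 [f fs].
  case: (boolP (L t)) => Lt.
    have [Ma_a [Ma_b [Ma_c [ta fa tc hb]]]] := (s2 X Ma hBa).1 t X1 Lt f.
    rewrite (tausND _ _ ta) in fa; rewrite (tausND _ _ tc) in hb.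
    have [Ma' [g hg]] := IH _ _ _ hb fs.
    by exists Ma'; split=> //; exists Ma_b.
  have [Mc [tc hb]] := (s2 X Ma hBa).2 t X1 Lt f.
  rewrite (tausND _ _ tc) in hb.
  exact: IH _ _ _ hb fs.
have langeq : forall s Ma Mb, B Ma (compose_marking Mb Z) -> all L s ->
    ((exists M', fire_seq ND Ma s M') <-> (exists M', fire_seq ND Mb s M')).
  elim=> [|t s IH] Ma Mb hBa /=.
    by move=> _; split=> _; [exists Mb | exists Ma].
  case/andP=> Lt als; split.
  - case=> M' [Ma1 [f fs]].
    have [Xa [Xb [Xc [ta fa tc hb]]]] := (s1 Ma _ hBa).1 t Ma1 Lt f.
    rewrite (tausD _ _ ta Mb erefl) in fa.
    have [Mb1 [g eb]] := fireL1 _ _ _ Lt fa.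
    rewrite (tausD _ _ tc Mb1 eb) eb in hb.
    have [M'' fs'] := (IH _ _ hb als).1 (ex_intro _ M' fs).
    by exists M''; exists Mb1.
  - case=> M' [Mb1 [f fs]].
    have [Ma_a [Ma_b [Ma_c [ta fa tc hb]]]] := (s2 _ Ma hBa).1 t _ Lt (fireL2 _ _ _ f).
    rewrite (tausND _ _ ta) in fa; rewrite (tausND _ _ tc) in hb.
    have [M'' fs'] := (IH _ _ hb als).2 (ex_intro _ M' fs).
    by exists M''; exists Ma_b.
have hr := run w' M0 M2 f2 aw' (fun x h => h).
have [Ma' [g hg]] := sim _ _ _ _ hinit hr.
rewrite -e in g.
have eM : Ma' = M1 by apply: fire_seq_det (fire_seq_del g) f1.
rewrite eM in hg.
move=> s; split; case=> als ex; split=> //; apply/(langeq s M1 M2 hg als) => //.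
Qed.

Theorem proposition4 (Tr : eqType) (P : finType) (N : pt_net P Tr)
    (M0 : marking P) (L H : pred Tr) :
  (forall t, t \in ntrans N <-> L t \/ H t) ->
  (forall t, ~ (L t /\ H t)) ->
  BNDC N M0 L H <->
  (forall M1 M2, reachable (delete N H) M0 M1 -> reachable N M0 M2 ->
     relR N M0 L H M1 M2 ->
     forall s, lang (delete N H) L M1 s <-> lang (delete N H) L M2 s).
Proof.
move=> h1 h2; split; [exact: dirA | exact: dirB].
Qed.
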